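(* Let $\psi$ be a saturation with saturation level $\alpha>0$ and $u:[0,L]\to\mathbb{R}$ a given velocity. Fix $n$ and suppose $0\le\rho_i^n\le\alpha$ for all $i=1,\dots,M$. If $(\rho_i^{n+1})_{i=1}^M$ satisfies the implicit scheme $$\frac{\rho_i^{n+1}-\rho_i^n}{\Delta t}+\frac{F_{i+1/2}^{n+1}-F_{i-1/2}^{n+1}}{\Delta x}=0,\qquad F_{i+1/2}^{n+1}=\rho_i^{n+1}(\psi_{i+1}^{n+1})^+u_{i+1/2}^++\rho_{i+1}^{n+1}(\psi_i^{n+1})^+u_{i+1/2}^-,$$ with $\psi_i^{n}=\psi(\rho_i^{n})$, $u_{i+1/2}=u(x_{i+1/2})$, and no-flux boundary conditions $F_{1/2}^{n+1}=F_{M+1/2}^{n+1}=0$, then $0\le\rho_i^{n+1}\le\alpha$ for all $i$, for any $\Delta t>0$ and $\Delta x>0$ (unconditionally).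
   Context: A saturation is a continuous function $\psi:[0,\infty)\to\mathbb{R}$ that is non-increasing and for which there is $\alpha>0$ (the saturation level) with $\psi(\alpha)=0$ and $(\alpha-s)\psi(s)>0$ for $s\neq\alpha$. Discretisation of $(0,L)$: $\Delta x=L/M$, cells with centres $x_i=\Delta x(i-1/2)$ and interfaces $x_{i+1/2}$, $i=1,\dots,M$; time step $\Delta t$; $\rho_i^n$ denotes the value on cell $i$ at time $t^n=n\Delta t$. Here $a^+=\max\{a,0\}$ and $a^-=\min\{a,0\}$. (This is a scheme for $\partial_t\rho+\partial_x(\rho\psi(\rho)u(x))=0$.) *)

(* Defs.v *)
From Stdlib Require Import Reals Lra Lia.
Open Scope R_scope.

Definition posp (a : R) : R := Rmax a 0.
Definition negp (a : R) : R := Rmin a 0.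

Definition continuous_on_nonneg (psi : R -> R) : Prop :=
  forall s, 0 <= s -> forall eps, 0 < eps ->
    exists delta, 0 < delta /\
      forall t, 0 <= t -> Rabs (t - s) < delta -> Rabs (psi t - psi s) < eps.

(* psi is a saturation with saturation level alpha (all conditions on [0,+oo);
   values of psi on negative reals are unconstrained). *)
Definition saturation (psi : R -> R) (alpha : R) : Prop :=
  0 < alpha /\
  continuous_on_nonneg psi /\
  (forall s t, 0 <= s -> s <= t -> psi t <= psi s) /\
  psi alpha = 0 /\
  (forall s, 0 <= s -> s <> alpha -> (alpha - s) * psi s > 0).

(* Numerical flux F_{i+1/2} at interface x_{i+1/2} = i * dx, i = 0..M,
   for cell values rho : nat -> R (cells indexed 1..M),
   with no-flux boundary conditions F_{1/2} = F_{M+1/2} = 0. *)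
Definition num_flux (psi u : R -> R) (dx : R) (M : nat) (rho : nat -> R)
    (i : nat) : R :=
  if andb (Nat.ltb 0 i) (Nat.ltb i M) then
    rho i * posp (psi (rho (S i))) * posp (u (INR i * dx))
    + rho (S i) * posp (psi (rho i)) * negp (u (INR i * dx))
  else 0.

(* Main.v *)
Require Import Defs.
From Stdlib Require Import Reals Lra Lia.
Open Scope R_scope.

Fixpoint sumR (f : nat -> R) (m : nat) : R :=
  match m with O => 0 | S m' => sumR f m' + f (S m') end.

Lemma sum_le_term f m i : (forall k, (1 <= k <= m)%nat -> f k <= 0) ->
  (1 <= i <= m)%nat -> sumR f m <= f i.
Proof.
  induction m as [|m IH]; intros H Hi; [lia|].
  simpl. destruct (Nat.eq_dec i (S m)) as [->|Hne].
  - assert (sumR f m <= 0).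
    { clear IH Hi. induction m as [|m IH2]; simpl; [lra|].
      assert (f (S m) <= 0) by (apply H; lia).
      assert (sumR f m <= 0) by (apply IH2; intros; apply H; lia). lra. }
    lra.
  - assert (f (S m) <= 0) by (apply H; lia).
    assert (sumR f m <= f i) by (apply IH; [intros; apply H; lia| lia]). lra.
Qed.

Lemma posp_ge0 a : 0 <= posp a.
Proof. unfold posp, Rmax; destruct Rle_dec; lra. Qed.
Lemma negp_le0 a : negp a <= 0.
Proof. unfold negp, Rmin; destruct Rle_dec; lra. Qed.
Lemma posp_neg a : a <= 0 -> posp a = 0.
Proof. unfold posp, Rmax; destruct Rle_dec; lra. Qed.

Lemma F_out psi u dx M rho k : (k = 0 \/ M <= k)%nat -> num_flux psi u dx M rho k = 0.
Proof.
  intros H; unfold num_flux.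
  destruct (Nat.ltb 0 k) eqn:E1; destruct (Nat.ltb k M) eqn:E2; simpl; auto.
  apply Nat.ltb_lt in E1; apply Nat.ltb_lt in E2; lia.
Qed.

Lemma F_in psi u dx M rho k : (0 < k < M)%nat -> num_flux psi u dx M rho k =
    rho k * posp (psi (rho (S k))) * posp (u (INR k * dx))
    + rho (S k) * posp (psi (rho k)) * negp (u (INR k * dx)).
Proof.
  intros H; unfold num_flux.
  replace (Nat.ltb 0 k) with true by (symmetry; apply Nat.ltb_lt; lia).
  replace (Nat.ltb k M) with true by (symmetry; apply Nat.ltb_lt; lia). reflexivity.
Qed.

Theorem proposition2p6
  (psi : R -> R) (alpha : R) (u : R -> R) (L dt : R) (M : nat)
  (rho_n rho_n1 : nat -> R) :
  saturation psi alpha ->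
  0 < L -> (0 < M)%nat -> 0 < dt ->
  (forall i, (1 <= i <= M)%nat -> 0 <= rho_n i <= alpha) ->
  (forall i, (1 <= i <= M)%nat ->
     (rho_n1 i - rho_n i) / dt
     + (num_flux psi u (L / INR M) M rho_n1 i
        - num_flux psi u (L / INR M) M rho_n1 (i - 1)) / (L / INR M) = 0) ->
  forall i, (1 <= i <= M)%nat -> 0 <= rho_n1 i <= alpha.
Proof.
  intros [Ha [_ [_ [_ Hsat]]]] HL HM Hdt Hn Heq.
  set (dx := L / INR M).
  assert (Hdx : 0 < dx).
  { unfold dx. apply Rdiv_lt_0_compat; auto. apply lt_0_INR; lia. }
  set (c := dt / dx).
  assert (Hc : 0 < c) by (unfold c; apply Rdiv_lt_0_compat; auto).
  set (F := num_flux psi u dx M rho_n1).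
  assert (HD : forall k, (1 <= k <= M)%nat ->
     rho_n1 k - rho_n k = - c * (F k - F (k - 1)%nat)).
  { intros k Hk. specialize (Heq k Hk). fold dx in Heq. fold F in Heq.
    unfold c.
    assert (E : rho_n1 k - rho_n k = dt * ((rho_n1 k - rho_n k) / dt)) by (field; lra).
    rewrite E.
    replace ((rho_n1 k - rho_n k) / dt) with (- ((F k - F (k - 1)%nat) / dx)) by lra.
    field. lra. }
  assert (Hlow : forall i, (1 <= i <= M)%nat -> 0 <= rho_n1 i).
  { set (s := fun k => if Rlt_dec (rho_n1 k) 0 then 1 else 0).
    assert (Hsign : forall m, (m < M)%nat -> 0 <= F m * (s (S m) - s m)).
    { intros m Hm. destruct (Nat.eq_dec m 0) as [->|Hm0].
      - unfold F; rewrite F_out by lia; lra.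
      - unfold F; rewrite F_in by lia.
        pose proof (posp_ge0 (psi (rho_n1 (S m)))).
        pose proof (posp_ge0 (u (INR m * dx))).
        pose proof (posp_ge0 (psi (rho_n1 m))).
        pose proof (negp_le0 (u (INR m * dx))).
        set (p1 := posp (psi (rho_n1 (S m)))) in *.
        set (p2 := posp (u (INR m * dx))) in *.
        set (p3 := posp (psi (rho_n1 m))) in *.
        set (p4 := negp (u (INR m * dx))) in *.
        assert (0 <= p1 * p2) by nra. assert (p3 * p4 <= 0) by nra.
        unfold s; destruct (Rlt_dec (rho_n1 (S m)) 0); destruct (Rlt_dec (rho_n1 m) 0);
          try nra. }
    set (g := fun k => s k * (rho_n1 k - rho_n k)).
    assert (HT : forall m, (m <= M)%nat -> sumR g m >= - c * s m * F m).
    { induction m as [|m IH]; intros Hm.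
      - simpl. unfold F; rewrite F_out by lia. lra.
      - simpl. specialize (IH ltac:(lia)). specialize (Hsign m ltac:(lia)).
        unfold g at 2. rewrite HD by lia.
        replace (S m - 1)%nat with m by lia.
        assert (0 <= c * (F m * (s (S m) - s m))) by (apply Rmult_le_pos; lra).
        assert (E : s (S m) * (- c * (F (S m) - F m)) = - c * s (S m) * F (S m)
                + c * (F m * (s (S m) - s m)) + c * s m * F m) by ring.
        rewrite E. lra. }
    specialize (HT M (le_n _)). unfold F in HT; rewrite F_out in HT by lia. fold F in HT.
    intros i Hi. destruct (Rlt_dec (rho_n1 i) 0) as [Hneg|]; [|lra]. exfalso.
    assert (Hle : sumR g M <= g i).
    { apply sum_le_term; auto. intros k Hk. unfold g, s.
      destruct (Rlt_dec (rho_n1 k) 0); [|lra]. specialize (Hn k Hk). lra. }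
    assert (Hg : g i = rho_n1 i - rho_n i).
    { unfold g, s. destruct (Rlt_dec (rho_n1 i) 0); [ring|lra]. }
    specialize (Hn i Hi). lra. }
  intros i Hi. split; [auto|].
  destruct (Rle_dec (rho_n1 i) alpha) as [|Hgt]; [auto|]. exfalso.
  apply Rnot_le_lt in Hgt.
  assert (Hpsi : psi (rho_n1 i) < 0).
  { specialize (Hsat (rho_n1 i) ltac:(lra) ltac:(lra)).
    destruct (Rlt_dec (psi (rho_n1 i)) 0); auto. nra. }
  assert (Hp0 : posp (psi (rho_n1 i)) = 0) by (apply posp_neg; lra).
  assert (H1 : exists X, 0 <= X /\ F i = rho_n1 i * X).
  { destruct (Nat.lt_ge_cases i M).
    - exists (posp (psi (rho_n1 (S i))) * posp (u (INR i * dx))).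
      split; [apply Rmult_le_pos; apply posp_ge0|].
      unfold F; rewrite F_in by lia. rewrite Hp0. ring.
    - exists 0. split; [lra|]. unfold F; rewrite F_out by lia. ring. }
  assert (H2 : exists Y, Y <= 0 /\ F (i - 1)%nat = rho_n1 i * Y).
  { destruct (Nat.eq_dec i 1) as [->|Hi1].
    - exists 0. split; [lra|]. unfold F; rewrite F_out by lia. ring.
    - exists (posp (psi (rho_n1 (i - 1)%nat)) * negp (u (INR (i - 1) * dx))).
      split.
      + pose proof (posp_ge0 (psi (rho_n1 (i - 1)%nat))).
        pose proof (negp_le0 (u (INR (i - 1) * dx))). nra.
      + unfold F; rewrite F_in by lia.
        replace (S (i - 1)) with i by lia. rewrite Hp0. ring. }
  destruct H1 as [X [HX EX]]. destruct H2 as [Y [HY EY]].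
  specialize (HD i Hi). rewrite EX, EY in HD.
  specialize (Hn i Hi).
  assert (0 <= rho_n1 i * X) by nra.
  assert (rho_n1 i * Y <= 0) by nra.
  nra.
Qed.
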